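(* In the setting described in the context, the mapping $\psi^c$ is a monotone $(1-\min\{2\beta,1/2\})\gamma$-CRS with regards to $h$.
   Context: Let $I=\{1,\dots,n\}$ be a set of items, $B$ a positive integer, $[B]=\{1,\dots,B\}$, $[0;B]=\{0,1,\dots,B\}$; for $u,w\in[0;B]^I$, $u\le w$ means coordinatewise. Let $f:[0;B]^I\to\mathbb{R}_{\ge0}$ be monotone and lattice submodular. Each item $i$ has a random state $\Phi(i)\in[B]$, independent across items, with known distribution $p_i(s)=\Pr[\Phi(i)=s]$. Item $i$ in state $s$ has a nonnegative integer cost $c_i(s)$, with $c_i(s)\ge c_i(s')$ whenever $s\ge s'$. $C$ is a positive integer budget and $\mathcal{I}^{out}\subseteq 2^I$ is a downward-closed family. For $S\subseteq I$ and $\phi\in[B]^I$, $\phi_S$ equals $\phi(i)$ on $S$ and $0$ elsewhere; $\overline{f}(S)=\mathbb{E}[f(\Phi_S)]$, $F(\overline{x})=\sum_{U\subseteq I}\prod_{i\in U}\overline{x}(i)\prod_{i\notin U}(1-\overline{x}(i))\overline{f}(U)$, $P_{\mathcal{I}^{out}}=\mathrm{conv}\{\mathbf{1}_S: S\in\mathcal{I}^{out}\}$. A monotone $(\beta,\gamma)$-balanced CRS for $\mathcal{I}^{out}$ is a (possibly randomized) scheme that, for any $\overline{z}\in\beta\cdot P_{\mathcal{I}^{out}}$ and the random set $R$ containing each $i$ independently with probability $\overline{z}(i)$, maps $R$ to $\chi(R)\subseteq R$ with $\chi(R)\in\mathcal{I}^{out}$, such that $\Pr[i\in\chi(R)\mid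 i\in R]\ge\gamma$ for all $i$, and for $i\in R\subseteq R'$, $\Pr[i\in\chi(R)]\ge\Pr[i\in\chi(R')]$. Assume such a scheme $\chi^{io}$ exists for given $\beta,\gamma\in[0,1]$. Problem P1: variables $x(i,t)\ge0$ for $i\in I$, $t\in\{1,\dots,C-c_i(B)\}$, $\overline{x}(i)=\sum_t x(i,t)$; maximize $F(\overline{x})$ subject to $\overline{x}(i)\le1$, $\overline{x}\in P_{\mathcal{I}^{out}}$, and for all $t\in\{1,\dots,C\}$: $\sum_{i\in I}\mathbb{E}[\min\{c_i(\Phi(i)),t\}]\sum_{t'=1}^{t}x(i,t')\le 2t$. Let $y$ be the solution of P1 computed by the stochastic continuous greedy algorithm of Asadpour and Nazerzadeh (2016) with stopping time $l=\min\{\beta,1/4\}$ and step size $\delta=o(n^{-3})$, $\overline{y}(i)=\sum_t y(i,t)$. Distribution $h$: $v\in[0;B]^I$ has independent coordinates with $\Pr[v(i)=j]=p_i(j)\overline{y}(i)$ for $j\in[B]$ and $\Pr[v(i)=0]=1-\overline{y}(i)$; $R(v)=\{i:v(i)\ne0\}$. Mapping $\psi^a$: $\psi^a(v)(i)=v(i)$ if $i\in\chi^{io}(R(v))$ (applying $\chi^{io}$ with $\overline{z}=\overline{y}$), else $0$. Mapping $\psi^b$: for each $i\in R(v)$ independently sample $t(i)\in\{1,\dots,C-c_i(B)\}$ with $\Pr[t(i)=t]=y(i,t)/\overline{y}(i)$; $\psi^b(v)(i)=v(i)$ if $i\in R(v)$ and $\sum_{i'\in R(v)\setminus\{i\},\,t(i')\le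 t(i)}c_{i'}(v(i'))\le t(i)$, else $0$. Mapping $\psi^c$: apply $\psi^a$ and $\psi^b$ to $v$ independently and set $\psi^c(v)(i)=v(i)$ if $\psi^a(v)(i)=v(i)$ and $\psi^b(v)(i)=v(i)$, and $0$ otherwise. An $\alpha$-CRS with regards to $h$ is a (possibly randomized) mapping $\psi$ on $[0;B]^I$ with $\psi(v)(i)\in\{0,v(i)\}$ and $\Pr[\psi(v)(i)=j\mid v(i)=j]\ge\alpha$ for all $i\in I$, $j\in[B]$ (probability over $v\sim h$ and the randomness of $\psi$); it is monotone if for all $u,w$ with $u(i)=w(i)$ and $u\le w$, $\Pr[\psi(u)(i)=u(i)]\ge\Pr[\psi(w)(i)=w(i)]$ (over the randomness of $\psi$ only). *)

(* Defs.v *)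
(* Finite, discrete probability written as explicit finite sums. *)
From HB Require Import structures.
From mathcomp Require Import all_boot all_order all_algebra.
Set Implicit Arguments. Unset Strict Implicit. Unset Printing Implicit Defensive.
Import Order.TTheory GRing.Theory Num.Theory.
Local Open Scope ring_scope.

(* Items I = 'I_n; vectors v in [0;B]^I are {ffun 'I_n -> 'I_B.+1};
   the value 0 means "not present". Times t in {0,...,C} are 'I_C.+1
   (only 1..C are genuine times). *)
Definition svec (n B : nat) := {ffun 'I_n -> 'I_B.+1}.

Definition svec_le n B (u w : svec n B) : bool := [forall i, (u i <= w i)%N].

Definition supp n B (v : svec n B) : {set 'I_n} := [set i | (v i : nat) != 0%N].

Definition down_closed n (Fam : {set {set 'I_n}}) : Prop :=
  forall S T : {set 'I_n}, S \in Fam -> T \subset S -> T \in Fam.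

Definition in_polytope (R : realFieldType) n (Fam : {set {set 'I_n}})
  (x : 'I_n -> R) : Prop :=
  exists lam : {set 'I_n} -> R,
    [/\ forall S, 0 <= lam S,
        forall S, S \notin Fam -> lam S = 0,
        \sum_(S : {set 'I_n}) lam S = 1
      & forall i, x i = \sum_(S : {set 'I_n}) lam S * (i \in S)%:R].

Definition in_scaled_polytope (R : realFieldType) n (b : R)
  (Fam : {set {set 'I_n}}) (z : 'I_n -> R) : Prop :=
  exists x0, in_polytope Fam x0 /\ forall i, z i = b * x0 i.

Definition prob_set (R : realFieldType) n (z : 'I_n -> R) (Q : {set 'I_n}) : R :=
  \prod_i (if i \in Q then z i else 1 - z i).

(* A randomized scheme chi, depending on the vector z, is a kernel:
   chi z Q S = Pr[chi(Q) = S].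
   Conditional probabilities Pr[A | B] >= g are written Pr[A /\ B] >= g Pr[B]. *)
Definition monotone_balanced_CRS (R : realFieldType) n (Fam : {set {set 'I_n}})
  (beta gamma : R)
  (chi : ('I_n -> R) -> {set 'I_n} -> {set 'I_n} -> R) : Prop :=
  forall z, in_scaled_polytope beta Fam z ->
  [/\ forall Q S, 0 <= chi z Q S,
      forall Q, \sum_(S : {set 'I_n}) chi z Q S = 1,
      forall Q S, chi z Q S != 0 -> S \subset Q /\ S \in Fam,
      forall i,
        gamma * \sum_(Q : {set 'I_n}) prob_set z Q * (i \in Q)%:R <=
        \sum_(Q : {set 'I_n}) prob_set z Q *
           \sum_(S : {set 'I_n}) chi z Q S * ((i \in S) && (i \in Q))%:R
    & forall i (Q Q' : {set 'I_n}), i \in Q -> Q \subset Q' ->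
        \sum_(S : {set 'I_n}) chi z Q' S * (i \in S)%:R <=
        \sum_(S : {set 'I_n}) chi z Q S * (i \in S)%:R ].

Definition hprob (R : realFieldType) n B (p : 'I_n -> 'I_B.+1 -> R)
  (ybar : 'I_n -> R) (v : svec n B) : R :=
  \prod_i (if (v i : nat) == 0%N then 1 - ybar i else p i (v i) * ybar i).

(* A randomized mapping psi on [0;B]^I is a kernel psi v o = Pr[psi(v) = o].
   alpha-CRS with regards to h. *)
Definition is_CRS (R : realFieldType) n B (h : svec n B -> R)
  (psi : svec n B -> svec n B -> R) (alpha : R) : Prop :=
  [/\ forall v o, 0 <= psi v o,
      forall v, \sum_(o : svec n B) psi v o = 1,
      forall v o, psi v o != 0 -> forall i, (o i : nat) = 0%N \/ o i = v i
    & forall i (j : 'I_B.+1), (j : nat) != 0%N ->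
        alpha * \sum_(v : svec n B) h v * (v i == j)%:R <=
        \sum_(v : svec n B) h v *
           \sum_(o : svec n B) psi v o * ((o i == j) && (v i == j))%:R ].

(* monotonicity (probability over the randomness of psi only) *)
Definition is_monotone (R : realFieldType) n B
  (psi : svec n B -> svec n B -> R) : Prop :=
  forall (u w : svec n B) (i : 'I_n), u i = w i -> svec_le u w ->
    \sum_(o : svec n B) psi w o * (o i == w i)%:R <=
    \sum_(o : svec n B) psi u o * (o i == u i)%:R.

Definition xbar (R : realFieldType) n C (x : 'I_n -> 'I_C.+1 -> R) (i : 'I_n) : R :=
  \sum_(t : 'I_C.+1) x i t.

Definition expected_min (R : realFieldType) n B (p : 'I_n -> 'I_B.+1 -> R)
  (c : 'I_n -> 'I_B.+1 -> nat) (i : 'I_n) (t : nat) : R :=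
  \sum_(s : 'I_B.+1 | (s : nat) != 0%N) p i s * (minn (c i s) t)%:R.

(* feasible region of P1; variables x(i,t) exist only for t in {1..C - c_i(B)},
   which we encode by forcing x(i,t) = 0 for the other t in {0..C} *)
Definition P1_feasible (R : realFieldType) n B C (p : 'I_n -> 'I_B.+1 -> R)
  (c : 'I_n -> 'I_B.+1 -> nat) (Fam : {set {set 'I_n}})
  (x : 'I_n -> 'I_C.+1 -> R) : Prop :=
  [/\ forall i t, 0 <= x i t,
      forall i (t : 'I_C.+1),
        ((t : nat) == 0%N) || (C - c i ord_max < t)%N -> x i t = 0,
      forall i, xbar x i <= 1,
      in_polytope Fam (xbar x)
    & forall t : 'I_C.+1, (0 < t)%N ->
        \sum_i expected_min p c i t *
               (\sum_(t' : 'I_C.+1 | (0 < t' <= t)%N) x i t')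
        <= 2 * (t : nat)%:R ].

Definition restrict n B (v : svec n B) (S : {set 'I_n}) : svec n B :=
  [ffun i => if i \in S then v i else ord0].

Definition psi_a (R : realFieldType) n B
  (chi : ('I_n -> R) -> {set 'I_n} -> {set 'I_n} -> R) (ybar : 'I_n -> R)
  (v o : svec n B) : R :=
  \sum_(S : {set 'I_n}) chi ybar (supp v) S * (o == restrict v S)%:R.

(* probability of the time vector t: for i in R(v), Pr[t(i)=t] = y(i,t)/ybar(i);
   other coordinates are irrelevant and set to 0. *)
Definition tweight (R : realFieldType) n B C (y : 'I_n -> 'I_C.+1 -> R)
  (ybar : 'I_n -> R) (v : svec n B) (t : {ffun 'I_n -> 'I_C.+1}) : R :=
  \prod_i (if ((v i : nat) != 0%N) && (ybar i != 0)
           then y i (t i) / ybar i else (t i == ord0)%:R).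

Definition keep_b n B C (c : 'I_n -> 'I_B.+1 -> nat) (v : svec n B)
  (t : {ffun 'I_n -> 'I_C.+1}) : svec n B :=
  [ffun i => if ((v i : nat) != 0%N) &&
               (\sum_(i' | (i' != i) && ((v i' : nat) != 0%N) && (t i' <= t i)%N)
                   c i' (v i') <= t i)%N
             then v i else ord0].

Definition psi_b (R : realFieldType) n B C (c : 'I_n -> 'I_B.+1 -> nat)
  (y : 'I_n -> 'I_C.+1 -> R) (ybar : 'I_n -> R) (v o : svec n B) : R :=
  \sum_(t : {ffun 'I_n -> 'I_C.+1}) tweight y ybar v t * (o == keep_b c v t)%:R.

Definition combine n B (v a b : svec n B) : svec n B :=
  [ffun i => if (a i == v i) && (b i == v i) then v i else ord0].

Definition psi_c (R : realFieldType) n B C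
  (chi : ('I_n -> R) -> {set 'I_n} -> {set 'I_n} -> R)
  (c : 'I_n -> 'I_B.+1 -> nat) (y : 'I_n -> 'I_C.+1 -> R) (ybar : 'I_n -> R)
  (v o : svec n B) : R :=
  \sum_(a : svec n B) \sum_(b : svec n B)
     psi_a chi ybar v a * psi_b c y ybar v b * (o == combine v a b)%:R.

(* Main.v *)
Require Import Defs.
From HB Require Import structures.
From mathcomp Require Import all_boot all_order all_algebra.
From mathcomp Require Import ring lra zify.
Set Implicit Arguments. Unset Strict Implicit. Unset Printing Implicit Defensive.
Import Order.TTheory GRing.Theory Num.Theory.
Local Open Scope ring_scope.


Section Generic.
Variable R : realFieldType.

Lemma sum_ind (T : finType) (b : T) (F : T -> R) :
  \sum_a ((a == b)%:R * F a) = F b.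
Proof.
rewrite (bigD1 b) //= eqxx mul1r big1 ?addr0 // => a /negbTE ->; by rewrite mul0r.
Qed.

Lemma sum2_mul (T1 T2 : finType) (F : T1 -> R) (G : T2 -> R) :
  \sum_x \sum_y F x * G y = (\sum_x F x) * (\sum_y G y).
Proof. rewrite mulr_suml; apply: eq_bigr => x _; by rewrite mulr_sumr. Qed.

Lemma eq_ffun_prod (I T : finType) (f g : {ffun I -> T}) :
  ((f == g)%:R : R) = \prod_k ((f k == g k)%:R).
Proof.
case: (f =P g) => [->|neq]; first by rewrite big1 // => k _; rewrite eqxx.
case: (pickP (fun k => f k != g k)) => [k hk | h].
  by rewrite (bigD1 k) //= (negbTE hk) mul0r.
exfalso; apply: neq; apply/ffunP => k; by move: (h k) => /negbFE/eqP.
Qed.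

Lemma prod_marg1 (I T : finType) (W : I -> T -> R) (D : {set I}) (x0 : T)
  (phi : {ffun I -> T} -> R) :
  (forall t t' : {ffun I -> T}, (forall k, k \notin D -> t k = t' k) -> phi t = phi t') ->
  \sum_(t : {ffun I -> T}) (\prod_k W k (t k)) * phi t =
  \sum_(s : {ffun I -> T}) phi s *
     \prod_k (if k \in D then (s k == x0)%:R * \sum_x W k x else W k (s k)).
Proof.
move=> hphi.
pose pr (t : {ffun I -> T}) : {ffun I -> T} := [ffun k => if k \in D then x0 else t k].
transitivity (\sum_(t : {ffun I -> T}) \sum_(s : {ffun I -> T}) (\prod_k W k (t k)) * ((pr t == s)%:R * phi s)).
  apply: eq_bigr => t _; rewrite -mulr_sumr; congr (_ * _).
  rewrite (eq_bigr (fun s => (s == pr t)%:R * phi s)); last by move=> s _; rewrite eq_sym.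
  rewrite sum_ind; apply: hphi => k hk; by rewrite ffunE (negbTE hk).
rewrite exchange_big; apply: eq_bigr => s _.
rewrite (_ : \sum_(t : {ffun I -> T}) _ = phi s * \sum_(t : {ffun I -> T}) ((\prod_k W k (t k)) * (pr t == s)%:R)); last first.
  by rewrite mulr_sumr; apply: eq_bigr => t _; ring.
congr (_ * _).
transitivity (\sum_(t : {ffun I -> T}) \prod_k (W k (t k) * ((if k \in D then x0 else t k) == s k)%:R)).
  apply: eq_bigr => t _; rewrite eq_ffun_prod -big_split /=.
  by apply: eq_bigr => k _; rewrite ffunE.
rewrite -(bigA_distr_bigA (fun k x => W k x * ((if k \in D then x0 else x) == s k)%:R)) /=; apply: eq_bigr => k _.
case: ifP => hk.
  by rewrite mulrC mulr_suml eq_sym; apply: eq_bigr => x _; rewrite mulrC.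
rewrite (eq_bigr (fun x => (x == s k)%:R * W k x)); first by rewrite sum_ind.
by move=> x _; rewrite mulrC.
Qed.

Lemma prod_marg (I T : finType) (W W' : I -> T -> R) (D : {set I}) (x0 : T)
  (phi : {ffun I -> T} -> R) :
  (forall k, k \notin D -> W k =1 W' k) ->
  (forall k, k \in D -> \sum_x W k x = \sum_x W' k x) ->
  (forall t t' : {ffun I -> T}, (forall k, k \notin D -> t k = t' k) -> phi t = phi t') ->
  \sum_(t : {ffun I -> T}) (\prod_k W k (t k)) * phi t = \sum_(t : {ffun I -> T}) (\prod_k W' k (t k)) * phi t.
Proof.
move=> h1 h2 hphi; rewrite (prod_marg1 W x0 hphi) (prod_marg1 W' x0 hphi).
apply: eq_bigr => s _; congr (_ * _); apply: eq_bigr => k _.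
case: ifP => hk; first by rewrite h2.
by rewrite h1 // hk.
Qed.

Lemma marg2 (I T : finType) (W : I -> T -> R) (k1 k2 : I) (phi : T -> T -> R) :
  k1 != k2 -> (forall k, k != k1 -> k != k2 -> \sum_x W k x = 1) ->
  \sum_(u : {ffun I -> T}) (\prod_k W k (u k)) * phi (u k1) (u k2) =
  \sum_a \sum_b W k1 a * W k2 b * phi a b.
Proof.
move=> hk hW.
pose E (a b : T) (k : I) (x : T) : R := (if k == k1 then (x == a)%:R else 1) * (if k == k2 then (x == b)%:R else 1).
have hE : forall a b (u : {ffun I -> T}), \prod_k E a b k (u k) = (u k1 == a)%:R * (u k2 == b)%:R.
  move=> a b u; rewrite (bigD1 k1) //= (bigD1 k2) /=; last by rewrite eq_sym.
  rewrite big1 /=; last by move=> k /andP [hk2 hk1]; rewrite /E (negbTE hk1) (negbTE hk2) mulr1.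
  rewrite /E eqxx (negbTE hk) [k2 == k1]eq_sym (negbTE hk) eqxx; ring.
transitivity (\sum_(u : {ffun I -> T}) \sum_a \sum_b phi a b * \prod_k (W k (u k) * E a b k (u k))).
  apply: eq_bigr => u _.
  have -> : phi (u k1) (u k2) = \sum_a \sum_b (u k1 == a)%:R * (u k2 == b)%:R * phi a b.
    rewrite (_ : \sum_a _ = \sum_a (a == u k1)%:R * (\sum_b (b == u k2)%:R * phi a b)); first by rewrite sum_ind sum_ind.
    apply: eq_bigr => a _; rewrite mulr_sumr; apply: eq_bigr => b _.
    by rewrite (eq_sym (u k1)) (eq_sym (u k2)) mulrA.
  rewrite mulr_sumr; apply: eq_bigr => a _; rewrite mulr_sumr; apply: eq_bigr => b _.
  rewrite big_split /= hE; ring.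
rewrite exchange_big; apply: eq_bigr => a _; rewrite exchange_big; apply: eq_bigr => b _.
rewrite -mulr_sumr.
rewrite -(bigA_distr_bigA (fun k x => W k x * E a b k x)) /= (bigD1 k1) //= (bigD1 k2) /=; last by rewrite eq_sym.
rewrite [\prod_(i | _ && _) _]big1 /=; last first.
  move=> k /andP [hk1 hk2]; rewrite -(hW k hk1 hk2); apply: eq_bigr => x _.
  by rewrite /E (negbTE hk1) (negbTE hk2) !mulr1.
rewrite mulr1 /E eqxx (negbTE hk) [k2 == k1]eq_sym (negbTE hk) eqxx.
rewrite (eq_bigr (fun x => (x == a)%:R * W k1 x)); last by move=> x _; rewrite !mulr1 mulrC.
rewrite sum_ind (eq_bigr (fun x => (x == b)%:R * W k2 x)); last by move=> x _; rewrite !mul1r mulrC.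
by rewrite sum_ind; ring.
Qed.

Lemma push (T U : finType) (K : U -> R) (e : U -> T) (Phi : T -> R) :
  \sum_o (\sum_u K u * (o == e u)%:R) * Phi o = \sum_u K u * Phi (e u).
Proof.
transitivity (\sum_o \sum_u K u * ((o == e u)%:R * Phi o)).
  by apply: eq_bigr => o _; rewrite mulr_suml; apply: eq_bigr => u _; rewrite mulrA.
rewrite exchange_big; apply: eq_bigr => u _; rewrite -mulr_sumr; congr (_ * _).
by rewrite (eq_bigr (fun o => (o == e u)%:R * Phi o)) ?sum_ind.
Qed.

Lemma eq_set_prod (I : finType) (A Bs : {set I}) :
  ((A == Bs)%:R : R) = \prod_k ((k \in A) == (k \in Bs))%:R.
Proof.
case: (A =P Bs) => [->|neq]; first by rewrite big1 // => k _; rewrite eqxx.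
case: (pickP (fun k => (k \in A) != (k \in Bs))) => [k hk | h].
  by rewrite (bigD1 k) //= (negbTE hk) mul0r.
exfalso; apply: neq; apply/setP => k; by move: (h k) => /negbFE/eqP.
Qed.

End Generic.

Lemma minn_sum (I : finType) (P : pred I) (a : I -> nat) T :
  (minn (\sum_(k | P k) a k) T <= \sum_(k | P k) minn (a k) T)%N.
Proof.
elim/big_rec2: _ => [|k s1 s2 _ IH]; first by rewrite min0n.
lia.
Qed.


Section Harris.
Variable R : realFieldType.
Variables n B : nat.
Local Notation V := (svec n B).

Definition upd (v : V) (k : 'I_n) (x : 'I_B.+1) : V :=
  [ffun m => if m == k then x else v m].

Lemma upd_eq v k x : upd v k x k = x.
Proof. by rewrite ffunE eqxx. Qed.
Lemma upd_neq v k x m : m != k -> upd v k x m = v m.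
Proof. by move=> h; rewrite ffunE (negbTE h). Qed.
Lemma upd_upd v k a b : upd (upd v k a) k b = upd v k b.
Proof. by apply/ffunP => m; rewrite !ffunE; case: eqP. Qed.
Lemma upd_id v k : upd v k (v k) = v.
Proof. by apply/ffunP => m; rewrite ffunE; case: eqP => // ->. Qed.

Definition mu (W : 'I_n -> 'I_B.+1 -> R) (v : V) : R := \prod_m W m (v m).

Lemma mu_upd W v k x : mu W v * W k x = W k (v k) * mu W (upd v k x).
Proof.
rewrite /mu (bigD1 k) //= [in RHS](bigD1 k) //= upd_eq.
rewrite [in RHS](eq_bigr (fun m => W m (v m))); last by move=> m hm; rewrite upd_neq.
ring.
Qed.

Lemma integrate W k (phi : V -> R) :
  \sum_(v : V) mu W v * (\sum_x W k x * phi (upd v k x)) =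
  (\sum_x W k x) * \sum_(v : V) mu W v * phi v.
Proof.
transitivity (\sum_(v : V) \sum_x W k (v k) * (mu W (upd v k x) * phi (upd v k x))).
  apply: eq_bigr => v _; rewrite mulr_sumr; apply: eq_bigr => x _.
  by rewrite mulrA mu_upd mulrA.
rewrite pair_bigA /=.
pose h (p : V * 'I_B.+1) := (upd p.1 k p.2, p.1 k).
have hh : cancel h h by case=> u a; rewrite /h /= upd_upd upd_id upd_eq.
rewrite (reindex_inj (can_inj hh)) /=.
rewrite (eq_bigr (fun p => W k p.2 * (mu W p.1 * phi p.1))); last first.
  by case=> u a _; rewrite /h /= upd_upd upd_id upd_eq.
rewrite -(pair_bigA _ (fun u a => W k a * (mu W u * phi u))) /=.
rewrite mulr_sumr; apply: eq_bigr => u _; by rewrite mulr_suml.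
Qed.

Lemma cheb (w a b : 'I_B.+1 -> R) : (forall x, 0 <= w x) ->
  (forall x y : 'I_B.+1, (x <= y)%N -> a y <= a x) ->
  (forall x y : 'I_B.+1, (x <= y)%N -> b y <= b x) ->
  (\sum_x w x * a x) * (\sum_x w x * b x) <= (\sum_x w x) * (\sum_x w x * (a x * b x)).
Proof.
move=> w0 ha hb.
have key: 0 <= \sum_x \sum_y w x * w y * ((a x - a y) * (b x - b y)).
  apply: sumr_ge0 => x _; apply: sumr_ge0 => y _.
  apply: mulr_ge0; first by apply: mulr_ge0.
  case: (leqP x y) => hxy.
    by apply: mulr_ge0; rewrite subr_ge0; [exact: ha | exact: hb].
  by apply: mulr_le0; rewrite subr_le0; [apply: ha | apply: hb]; exact: ltnW.
have E: \sum_x \sum_y w x * w y * ((a x - a y) * (b x - b y)) =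
   \sum_x \sum_y ((w x * (a x * b x)) * w y + w x * (w y * (a y * b y))
      - (w x * a x) * (w y * b y) - (w x * b x) * (w y * a y)).
  by apply: eq_bigr => x _; apply: eq_bigr => y _; ring.
have E2: \sum_x \sum_y ((w x * (a x * b x)) * w y + w x * (w y * (a y * b y))
      - (w x * a x) * (w y * b y) - (w x * b x) * (w y * a y)) =
   (\sum_x w x * (a x * b x)) * (\sum_y w y) + (\sum_x w x) * (\sum_y w y * (a y * b y))
   - (\sum_x w x * a x) * (\sum_y w y * b y) - (\sum_x w x * b x) * (\sum_y w y * a y).
  rewrite -!sum2_mul -big_split -!sumrB /=; apply: eq_bigr => x _.
  by rewrite -big_split -!sumrB.
rewrite E E2 in key.
lra.
Qed.

Definition decr (f : V -> R) := forall u w : V, svec_le u w -> f w <= f u.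
Definition depS (S : {set 'I_n}) (f : V -> R) :=
  forall u v : V, (forall k, k \in S -> u k = v k) -> f u = f v.

Lemma svec_le_upd u w k x : svec_le u w -> svec_le (upd u k x) (upd w k x).
Proof.
move=> /forallP h; apply/forallP => m; rewrite !ffunE; case: eqP => // _; exact: h.
Qed.

Lemma svec_le_upd2 v k (x y : 'I_B.+1) : (x <= y)%N -> svec_le (upd v k x) (upd v k y).
Proof. by move=> h; apply/forallP => m; rewrite !ffunE; case: eqP. Qed.

Lemma harris W S f g : (forall k x, 0 <= W k x) -> decr f -> decr g ->
  depS S f -> depS S g ->
  (\sum_(v : V) mu W v * f v) * (\sum_(v : V) mu W v * g v) <=
  (\sum_(v : V) mu W v) * (\sum_(v : V) mu W v * (f v * g v)).
Proof.
move=> W0; move: {2}#|S| (erefl #|S|) => m; elim: m S f g => [|m IH] S f g hS hf hg df dg.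
  have S0 : S = set0 by apply/cards0_eq.
  have cf : forall u v, f u = f v by move=> u v; apply: df => k; rewrite S0 inE.
  have cg : forall u v, g u = g v by move=> u v; apply: dg => k; rewrite S0 inE.
  rewrite !mulr_suml; apply: ler_sum => u _; rewrite !mulr_sumr; apply: ler_sum => v _.
  by rewrite (cf u v) le_eqVlt; apply/orP; left; apply/eqP; ring.
have : (0 < #|S|)%N by rewrite hS.
case/card_gt0P => k hk.
set S' := S :\ k.
have hS' : #|S'| = m by move: hS; rewrite (cardsD1 k) hk add1n => -[].
pose F v := \sum_x W k x * f (upd v k x).
pose G v := \sum_x W k x * g (upd v k x).
pose H v := \sum_x W k x * (f (upd v k x) * g (upd v k x)).
set Z := \sum_x W k x.
have mu0 : forall v, 0 <= mu W v by move=> v; apply: prodr_ge0 => i _.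
have decrF : forall f0, decr f0 -> decr (fun v => \sum_x W k x * f0 (upd v k x)).
  move=> f0 hf0 u w huw; apply: ler_sum => x _; apply: ler_wpM2l => //.
  by apply: hf0; apply: svec_le_upd.
have depF : forall f0, depS S f0 -> depS S' (fun v => \sum_x W k x * f0 (upd v k x)).
  move=> f0 hf0 u v huv; apply: eq_bigr => x _; congr (_ * _); apply: hf0 => j hj.
  rewrite !ffunE; case: eqP => // /eqP hjk; apply: huv.
  by rewrite /S' in_setD1 hjk.
have IH' := IH S' F G hS' (decrF f hf) (decrF g hg) (depF f df) (depF g dg).
have eF : \sum_(v : V) mu W v * F v = Z * \sum_(v : V) mu W v * f v by rewrite integrate.
have eG : \sum_(v : V) mu W v * G v = Z * \sum_(v : V) mu W v * g v by rewrite integrate.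
have eH : \sum_(v : V) mu W v * H v = Z * \sum_(v : V) mu W v * (f v * g v)
  by rewrite (integrate W k (fun v => f v * g v)).
have chebv : forall v, F v * G v <= Z * H v.
  move=> v; apply: cheb => // x y hxy; [apply: hf | apply: hg]; exact: svec_le_upd2.
have Z0 : 0 <= Z by apply: sumr_ge0.
case: (ltgtP Z 0) => [hZ|hZ|hZ]; first by move: Z0; rewrite leNgt hZ.
  have h1 : (\sum_(v : V) mu W v) * (\sum_(v : V) mu W v * (F v * G v)) <=
            (\sum_(v : V) mu W v) * (Z * \sum_(v : V) mu W v * H v).
    apply: ler_wpM2l; first by apply: sumr_ge0.
    rewrite mulr_sumr; apply: ler_sum => v _; rewrite [Z * _]mulrCA; apply: ler_wpM2l => //; exact: chebv.
  rewrite eF eG eH in IH' h1.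
  have h2 : Z * Z * ((\sum_(v : V) mu W v * f v) * (\sum_(v : V) mu W v * g v)) <=
            Z * Z * ((\sum_(v : V) mu W v) * (\sum_(v : V) mu W v * (f v * g v))).
    set A := \sum_(v : V) mu W v * f v; set Bg := \sum_(v : V) mu W v * g v.
    set M := \sum_(v : V) mu W v; set Cc := \sum_(v : V) mu W v * (f v * g v).
    have e1 : Z * Z * (A * Bg) = Z * A * (Z * Bg) by ring.
    have e2 : Z * Z * (M * Cc) = M * (Z * (Z * Cc)) by ring.
    rewrite e1 e2; exact: le_trans IH' h1.
  by rewrite ler_pM2l ?mulr_gt0 // in h2.
have Wk0 : forall x, W k x = 0.
  move=> x; apply/eqP; move: hZ => /eqP; rewrite psumr_eq0 // => /allP h.
  by apply: h; rewrite mem_index_enum.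
have muz : forall v, mu W v = 0 by move=> v; rewrite /mu (bigD1 k) //= Wk0 mul0r.
rewrite !big1 ?mul0r // => v _; by rewrite muz mul0r.
Qed.

End Harris.


Section Setting.
Variables (R : realFieldType) (n B C : nat).
Variables (p : 'I_n -> 'I_B.+1 -> R) (c : 'I_n -> 'I_B.+1 -> nat).
Variables (Fam : {set {set 'I_n}}) (beta gamma : R).
Variable chi : ('I_n -> R) -> {set 'I_n} -> {set 'I_n} -> R.
Variables (y x : 'I_n -> 'I_C.+1 -> R).
Hypothesis hp0 : forall i (s : 'I_B.+1), (s : nat) != 0%N -> 0 <= p i s.
Hypothesis hp1 : forall i, \sum_(s : 'I_B.+1 | (s : nat) != 0%N) p i s = 1.
Hypothesis hc : forall i (s s' : 'I_B.+1), (0 < s')%N -> (s' <= s)%N -> (c i s' <= c i s)%N.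
Hypothesis hdown : down_closed Fam.
Hypothesis hbeta : 0 <= beta <= 1.
Hypothesis hgamma : 0 <= gamma <= 1.
Hypothesis hchi : monotone_balanced_CRS Fam beta gamma chi.
Hypothesis hx : P1_feasible p c Fam x.
Hypothesis hy : forall i t, y i t = Num.min beta (1 / 4) * x i t.

Local Notation V := (svec n B).
Local Notation l := (Num.min beta (1 / 4)).
Local Notation z := (xbar y).

Lemma l_ge0 : 0 <= l.
Proof. case/andP: hbeta => b0 _; rewrite minEle; case: ifP => //; lra. Qed.
Lemma l_le4 : l <= 1 / 4.
Proof. rewrite minEle; case: ifP => h //; move: h; lra. Qed.
Lemma l_leb : l <= beta.
Proof. rewrite minEle; case: ifP => h //; move: h; lra. Qed.
Lemma min2l : Num.min (2 * beta) (1 / 2) = 2 * l.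
Proof. rewrite !minEle; case: ifP => h1; case: ifP => h2; move: h1 h2; lra. Qed.

Lemma x_ge0 i t : 0 <= x i t.
Proof. by case: hx => h _ _ _ _; exact: h. Qed.
Lemma y_ge0 i t : 0 <= y i t.
Proof. by rewrite hy mulr_ge0 ?l_ge0 ?x_ge0. Qed.
Lemma y_t0 i : y i ord0 = 0.
Proof. by case: hx => _ h _ _ _; rewrite hy h ?mulr0. Qed.
Lemma z_eq i : z i = l * xbar x i.
Proof. by rewrite /xbar mulr_sumr; apply: eq_bigr => t _; rewrite hy. Qed.
Lemma z_ge0 i : 0 <= z i.
Proof. by apply: sumr_ge0 => t _; exact: y_ge0. Qed.
Lemma xbar_ge0 i : 0 <= xbar x i.
Proof. by apply: sumr_ge0 => t _; exact: x_ge0. Qed.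
Lemma z_le i : z i <= 1 / 4.
Proof.
case: hx => _ _ h _ _; rewrite z_eq.
have := l_le4; have := l_ge0; have := h i; have := xbar_ge0 i; nra.
Qed.
Lemma y0_of_z0 k t : z k = 0 -> y k t = 0.
Proof.
move=> /eqP; rewrite /xbar psumr_eq0; last by move=> u _; exact: y_ge0.
by move=> /allP h; apply/eqP; apply: h; rewrite mem_index_enum.
Qed.

Definition hw (k : 'I_n) (a : 'I_B.+1) : R :=
  if (a : nat) == 0%N then 1 - z k else p k a * z k.

Lemma hw_ge0 k a : 0 <= hw k a.
Proof.
rewrite /hw; case: eqP => h; first by have := z_le k; lra.
by rewrite mulr_ge0 ?z_ge0 // hp0 //; apply/eqP.
Qed.

Lemma sum_nz (F : 'I_B.+1 -> R) :
  \sum_a F a = F ord0 + \sum_(a : 'I_B.+1 | (a : nat) != 0%N) F a.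
Proof.
rewrite (bigD1 ord0) //=; congr (_ + _); apply: eq_bigl => a.
Qed.

Lemma hw_sum k : \sum_a hw k a = 1.
Proof.
rewrite sum_nz /hw /= (eq_bigr (fun a => p k a * z k)); last by move=> a /negbTE ->.
by rewrite -mulr_suml hp1 mul1r subrK.
Qed.

Lemma hprob_mu (v : V) : hprob p z v = mu hw v.
Proof. by []. Qed.

Definition twa (a : 'I_B.+1) (k : 'I_n) (tau : 'I_C.+1) : R :=
  if ((a : nat) != 0%N) && (z k != 0) then y k tau / z k else (tau == ord0)%:R.

Lemma tweight_prod (v : V) t : tweight y z v t = \prod_k twa (v k) k (t k).
Proof. by []. Qed.

Lemma twa_ge0 a k tau : 0 <= twa a k tau.
Proof.
rewrite /twa; case: ifP => _; last by rewrite ler0n.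
by rewrite divr_ge0 ?y_ge0 ?z_ge0.
Qed.

Lemma twa_sum a k : \sum_tau twa a k tau = 1.
Proof.
case: (boolP (((a:nat) != 0%N) && (z k != 0))) => h.
  rewrite (eq_bigr (fun tau => y k tau / z k)); last by move=> tau _; rewrite /twa h.
  by rewrite -mulr_suml; apply: mulfV; case/andP: h.
rewrite (eq_bigr (fun tau => (tau == ord0)%:R * 1)) ?sum_ind // => tau _.
by rewrite /twa (negbTE h) mulr1.
Qed.

Lemma twa_z (a : 'I_B.+1) k tau : (a : nat) != 0%N -> z k * twa a k tau = y k tau.
Proof.
move=> ha; rewrite /twa ha /=; case: (eqVneq (z k) 0) => hz /=.
  by rewrite hz mul0r y0_of_z0.
by rewrite mulrC divfK.
Qed.

Lemma tweight_ge0 (v : V) t : 0 <= tweight y z v t.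
Proof. by apply: prodr_ge0 => k _; exact: twa_ge0. Qed.

Lemma tweight_sum (v : V) : \sum_t tweight y z v t = 1.
Proof.
rewrite (eq_bigr (fun t : {ffun 'I_n -> 'I_C.+1} => \prod_k twa (v k) k (t k))) //.
rewrite -(bigA_distr_bigA (fun k tau => twa (v k) k tau)) /=.
by rewrite big1 // => k _; rewrite twa_sum.
Qed.

Lemma z_poly : in_scaled_polytope beta Fam z.
Proof.
case: hx => _ _ _ [lam [lam0 lamF lam1 lamx]] _.
case/andP: hbeta => b0 b1.
case: (eqVneq beta 0) => hb.
  exists (xbar x); split; first by exists lam.
  move=> i; rewrite z_eq hb; rewrite (_ : Num.min 0 (1/4) = 0) //.
  by rewrite min_l //; lra.
have bpos : 0 < beta by rewrite lt_neqAle eq_sym hb.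
set r := l / beta.
have r0 : 0 <= r by rewrite divr_ge0 ?l_ge0.
have r1 : r <= 1 by rewrite ler_pdivrMr // (mul1r beta); exact: l_leb.
have set0F : set0 \in Fam.
  case: (pickP (fun S => lam S != 0)) => [S hS | h].
    apply: (hdown (S := S)); last exact: sub0set.
    by apply/negPn/negP => hS'; move: hS; rewrite lamF ?eqxx.
  exfalso; move: lam1; rewrite big1 => [/eqP|S _]; first by rewrite eq_sym oner_eq0.
  by apply/eqP; move: (h S) => /negbFE.
exists (fun i => r * xbar x i); split; last first.
  by move=> i; rewrite z_eq /r mulrA mulrCA mulfV // mulr1.
exists (fun S => r * lam S + (1 - r) * (S == set0)%:R); split.
- by move=> S; apply: addr_ge0; apply: mulr_ge0; rewrite ?subr_ge0 ?ler0n.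
- move=> S hS; rewrite lamF // mulr0 add0r.
  have -> : (S == set0) = false by apply/negP => /eqP hS0; move: hS; rewrite hS0 set0F.
  by rewrite mulr0.
- rewrite big_split /= -mulr_sumr -mulr_sumr lam1.
  rewrite (eq_bigr (fun S => (S == set0)%:R * 1)) ?sum_ind; last by move=> S _; rewrite mulr1.
  ring.
- move=> i; rewrite (eq_bigr (fun S => r * (lam S * (i \in S)%:R) + (1 - r) * ((S == set0)%:R * (i \in S)%:R))); last by move=> S _; ring.
  rewrite big_split /= -!mulr_sumr sum_ind -lamx inE mulr0 addr0 //.
Qed.

Lemma chiP : [/\ forall Q S, 0 <= chi z Q S,
      forall Q, \sum_(S : {set 'I_n}) chi z Q S = 1,
      forall Q S, chi z Q S != 0 -> S \subset Q /\ S \in Fam,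
      forall i,
        gamma * \sum_(Q : {set 'I_n}) prob_set z Q * (i \in Q)%:R <=
        \sum_(Q : {set 'I_n}) prob_set z Q *
           \sum_(S : {set 'I_n}) chi z Q S * ((i \in S) && (i \in Q))%:R
    & forall i (Q Q' : {set 'I_n}), i \in Q -> Q \subset Q' ->
        \sum_(S : {set 'I_n}) chi z Q' S * (i \in S)%:R <=
        \sum_(S : {set 'I_n}) chi z Q S * (i \in S)%:R ].
Proof. exact: hchi z_poly. Qed.

Lemma chi_ge0 Q S : 0 <= chi z Q S. Proof. by case: chiP => h _ _ _ _; exact: h. Qed.
Lemma chi_sum Q : \sum_(S : {set 'I_n}) chi z Q S = 1. Proof. by case: chiP => _ h _ _ _; exact: h. Qed.

Lemma psa_ge0 (v a : V) : 0 <= psi_a chi z v a.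
Proof. by apply: sumr_ge0 => S _; rewrite mulr_ge0 ?chi_ge0 ?ler0n. Qed.
Lemma psb_ge0 (v b : V) : 0 <= psi_b c y z v b.
Proof. by apply: sumr_ge0 => t _; rewrite mulr_ge0 ?tweight_ge0 ?ler0n. Qed.
Lemma psc_ge0 (v o : V) : 0 <= psi_c chi c y z v o.
Proof.
apply: sumr_ge0 => a _; apply: sumr_ge0 => b _.
by rewrite !mulr_ge0 ?psa_ge0 ?psb_ge0 ?ler0n.
Qed.

Lemma psa_push (v : V) (Phi : V -> R) :
  \sum_o psi_a chi z v o * Phi o = \sum_(S : {set 'I_n}) chi z (supp v) S * Phi (restrict v S).
Proof. exact: push. Qed.

Lemma psb_push (v : V) (Phi : V -> R) :
  \sum_o psi_b c y z v o * Phi o = \sum_(t : {ffun 'I_n -> 'I_C.+1}) tweight y z v t * Phi (keep_b c v t).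
Proof. exact: push. Qed.

Lemma psc_push (v : V) (Phi : V -> R) :
  \sum_o psi_c chi c y z v o * Phi o =
  \sum_(a : V) \sum_(b : V) psi_a chi z v a * psi_b c y z v b * Phi (combine v a b).
Proof.
rewrite (eq_bigr (fun o => (\sum_(ab : V * V) psi_a chi z v ab.1 * psi_b c y z v ab.2 *
     (o == combine v ab.1 ab.2)%:R) * Phi o)); last by move=> o _; rewrite /psi_c pair_bigA.
by rewrite push pair_bigA.
Qed.

Lemma psa_sum (v : V) : \sum_o psi_a chi z v o = 1.
Proof.
rewrite (eq_bigr (fun o => psi_a chi z v o * 1)) ?psa_push; last by move=> o _; rewrite mulr1.
by rewrite (eq_bigr (fun S => chi z (supp v) S)) ?chi_sum // => S _; rewrite mulr1.
Qed.

Lemma psb_sum (v : V) : \sum_o psi_b c y z v o = 1.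
Proof.
rewrite (eq_bigr (fun o => psi_b c y z v o * 1)) ?psb_push; last by move=> o _; rewrite mulr1.
by rewrite (eq_bigr (fun t => tweight y z v t)) ?tweight_sum // => t _; rewrite mulr1.
Qed.

Lemma psc_sum (v : V) : \sum_o psi_c chi c y z v o = 1.
Proof.
rewrite (eq_bigr (fun o => psi_c chi c y z v o * 1)) ?psc_push; last by move=> o _; rewrite mulr1.
rewrite (eq_bigr (fun a => \sum_(b : V) psi_a chi z v a * psi_b c y z v b)).
  by rewrite sum2_mul psa_sum psb_sum mulr1.
by move=> a _; apply: eq_bigr => b _; rewrite mulr1.
Qed.

Lemma psc_supp (v o : V) : psi_c chi c y z v o != 0 ->
  forall i, (o i : nat) = 0%N \/ o i = v i.
Proof.
move=> h i; case: (boolP ((o i : nat) == 0%N)) => [/eqP|h1]; [by left | right].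
apply/eqP; apply: contraR h => h2; apply/eqP.
rewrite /psi_c big1 // => a _; rewrite big1 // => b _.
have -> : (o == combine v a b) = false.
  apply/negP => /eqP ho; move: h1 h2; rewrite ho ffunE; case: ifP => _ //.
  by rewrite eqxx.
by rewrite mulr0.
Qed.

Definition fa i (v : V) := \sum_(S : {set 'I_n}) chi z (supp v) S * (i \in S)%:R.
Definition cond i (v : V) (t : {ffun 'I_n -> 'I_C.+1}) : bool :=
  (\sum_(i' | (i' != i) && ((v i' : nat) != 0%N) && (t i' <= t i)%N) c i' (v i') <= t i)%N.
Definition fb i (v : V) := \sum_(t : {ffun 'I_n -> 'I_C.+1}) tweight y z v t * (cond i v t)%:R.

Lemma fa_ge0 i v : 0 <= fa i v.
Proof. by apply: sumr_ge0 => S _; rewrite mulr_ge0 ?chi_ge0 ?ler0n. Qed.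
Lemma fb_ge0 i v : 0 <= fb i v.
Proof. by apply: sumr_ge0 => t _; rewrite mulr_ge0 ?tweight_ge0 ?ler0n. Qed.

Lemma ord0_neq (a : 'I_B.+1) : (a : nat) != 0%N -> (ord0 == a) = false.
Proof. by move=> h; apply/negP => /eqP e; move: h; rewrite -e. Qed.

Lemma kp_eq i (v : V) : (v i : nat) != 0%N ->
  \sum_o psi_c chi c y z v o * (o i == v i)%:R = fa i v * fb i v.
Proof.
move=> hv; rewrite psc_push.
have hcomb : forall a b : V, (combine v a b i == v i) = (a i == v i) && (b i == v i).
  move=> a b; rewrite ffunE; case: ifP => h; first by rewrite eqxx.
  by rewrite ord0_neq.
rewrite (eq_bigr (fun a => \sum_(b : V) (psi_a chi z v a * (a i == v i)%:R) *
                                        (psi_b c y z v b * (b i == v i)%:R))); last first.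
  move=> a _; apply: eq_bigr => b _; rewrite hcomb -mulnb natrM; ring.
rewrite sum2_mul psa_push psb_push; congr (_ * _).
  apply: eq_bigr => S _; congr (_ * _); rewrite ffunE; case: ifP => h; first by rewrite eqxx.
  by rewrite ord0_neq.
apply: eq_bigr => t _; congr (_ * _); rewrite ffunE hv /=; case: ifP => h.
  by rewrite /cond h eqxx.
by rewrite /cond h ord0_neq.
Qed.

Lemma kp_eq0 i (v : V) : (v i : nat) = 0%N ->
  \sum_o psi_c chi c y z v o * (o i == v i)%:R = 1.
Proof.
move=> hv; rewrite -[RHS](psc_sum v); apply: eq_bigr => o ho.
case: (eqVneq (psi_c chi c y z v o) 0) => [->|h]; first by rewrite mul0r.
have hvi : v i = ord0 by apply: val_inj.
case: (psc_supp h i) => [e|->]; last by rewrite eqxx mulr1.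
have -> : o i = ord0 by apply: val_inj.
by rewrite hvi eqxx mulr1.
Qed.

Lemma supp_sub (u w : V) : svec_le u w -> supp u \subset supp w.
Proof.
move=> /forallP h; apply/subsetP => k; rewrite !inE -!lt0n => hk.
exact: leq_trans hk (h k).
Qed.

Lemma fa_mono i (u w : V) : svec_le u w -> (u i : nat) != 0%N -> fa i w <= fa i u.
Proof.
move=> huw hu; case: chiP => _ _ _ _ hm; apply: hm; last exact: supp_sub.
by rewrite inE.
Qed.

Lemma fb_mono i (u w : V) : svec_le u w -> (u i : nat) != 0%N -> u i = w i ->
  fb i w <= fb i u.
Proof.
move=> huw hu hi.
have hle : forall k, (u k <= w k)%N by move=> k; move/forallP: huw; apply.
apply: (@le_trans _ _ (\sum_(t : {ffun 'I_n -> 'I_C.+1}) tweight y z w t * (cond i u t)%:R)).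
  apply: ler_sum => t _; apply: ler_wpM2l; first exact: tweight_ge0.
  rewrite ler_nat; case: (boolP (cond i w t)) => // hw.
  rewrite (_ : cond i u t = true) //; move: hw; rewrite /cond => hw.
  apply: leq_trans hw.
  rewrite [X in (_ <= X)%N]big_mkcond [X in (X <= _)%N]big_mkcond /=.
  apply: leq_sum => k _; case: ifP => // /andP [/andP [hki huk] htk].
  have hwk : (w k : nat) != 0%N by rewrite -lt0n; apply: leq_trans (hle k); rewrite lt0n.
  by rewrite hki hwk htk /=; apply: hc => //; rewrite lt0n.
rewrite /fb (eq_bigr (fun t : {ffun 'I_n -> 'I_C.+1} => (\prod_k twa (w k) k (t k)) * (cond i u t)%:R)) //.
rewrite [X in _ <= X](eq_bigr (fun t : {ffun 'I_n -> 'I_C.+1} => (\prod_k twa (u k) k (t k)) * (cond i u t)%:R)) //.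
rewrite le_eqVlt; apply/orP; left; apply/eqP.
apply: (prod_marg (W := fun k tau => twa (w k) k tau) (W' := fun k tau => twa (u k) k tau)
    (D := [set k | (u k : nat) == 0%N]) ord0 (phi := fun t => (cond i u t)%:R)).
- move=> k; rewrite inE => huk tau.
  have hwk : (w k : nat) != 0%N by rewrite -lt0n; apply: leq_trans (hle k); rewrite lt0n.
  by rewrite /twa huk hwk.
- by move=> k _; rewrite !twa_sum.
move=> t t' ht; rewrite /cond.
have hti : t i = t' i by apply: ht; rewrite inE.
rewrite hti; congr ((_ <= _)%N)%:R; apply: eq_bigl => k.
case: (boolP ((u k : nat) != 0%N)) => h; last by rewrite !andbF.
by rewrite ht ?hti // inE.
Qed.

Lemma psc_mono : is_monotone (psi_c chi c y z).
Proof.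
move=> u w i hi huw.
case: (eqVneq (u i : nat) 0%N) => hu.
  rewrite !kp_eq0 //; by rewrite -hi.
rewrite !kp_eq //; last by rewrite -hi.
apply: ler_pM; rewrite ?fa_ge0 ?fb_ge0 //; [exact: fa_mono | exact: fb_mono].
Qed.

Section Fixed.
Variables (i : 'I_n) (j : 'I_B.+1).
Hypothesis hj : (j : nat) != 0%N.

Definition Wj (k : 'I_n) (a : 'I_B.+1) : R :=
  if k == i then (a == j)%:R * hw k a else hw k a.

Lemma Wj_ge0 k a : 0 <= Wj k a.
Proof. by rewrite /Wj; case: ifP => _; rewrite ?mulr_ge0 ?ler0n ?hw_ge0. Qed.

Lemma mu_ge0 (v : V) : 0 <= mu Wj v.
Proof. by apply: prodr_ge0 => k _; exact: Wj_ge0. Qed.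

Lemma Wj_sum k : k != i -> \sum_a Wj k a = 1.
Proof. by move=> hk; rewrite /Wj (negbTE hk) hw_sum. Qed.

Lemma hw_j : hw i j = p i j * z i.
Proof. by rewrite /hw (negbTE hj). Qed.

Lemma Wj_sum_i : \sum_a Wj i a = p i j * z i.
Proof. by rewrite /Wj eqxx sum_ind hw_j. Qed.

Lemma mu_Wj (v : V) : mu Wj v = hprob p z v * (v i == j)%:R.
Proof.
rewrite hprob_mu /mu (bigD1 i) //= [in RHS](bigD1 i) //= /Wj eqxx.
rewrite (eq_bigr (fun k => hw k (v k))); last by move=> k /negbTE ->.
ring.
Qed.

Lemma S0_eq : \sum_(v : V) mu Wj v = p i j * z i.
Proof.
rewrite /mu -(bigA_distr_bigA (fun k a => Wj k a)) /= (bigD1 i) //= Wj_sum_i big1 ?mulr1 //.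
move=> k hk; exact: Wj_sum.
Qed.

Lemma mu_Wj0 (v : V) : v i != j -> mu Wj v = 0.
Proof. by move=> h; rewrite mu_Wj (negbTE h) mulr0. Qed.

Lemma upd_j (v : V) : v i = j -> upd v i j = v.
Proof. by move=> <-; rewrite upd_id. Qed.

Definition fa' (v : V) := fa i (upd v i j).
Definition fb' (v : V) := fb i (upd v i j).

Lemma rhs_eq :
  \sum_(v : V) hprob p z v * \sum_o psi_c chi c y z v o * ((o i == j) && (v i == j))%:R
   = \sum_(v : V) mu Wj v * (fa' v * fb' v).
Proof.
apply: eq_bigr => v _; rewrite mu_Wj.
case: (eqVneq (v i) j) => h.
  rewrite /fa' /fb' upd_j // -kp_eq; last by rewrite h.
  rewrite mulr1; congr (_ * _); apply: eq_bigr => o _; by rewrite h andbT.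
have -> : \sum_o psi_c chi c y z v o * ((o i == j) && false)%:R = 0.
  by apply: big1 => o _; rewrite andbF /=; ring.
rewrite /=; ring.
Qed.

Lemma harris_app :
  (\sum_(v : V) mu Wj v * fa' v) * (\sum_(v : V) mu Wj v * fb' v) <=
  (p i j * z i) * \sum_(v : V) mu Wj v * (fa' v * fb' v).
Proof.
rewrite -S0_eq; apply: (harris (S := setT)).
- exact: Wj_ge0.
- move=> u w huw; rewrite /fa'; apply: fa_mono; first exact: svec_le_upd.
  by rewrite upd_eq.
- move=> u w huw; rewrite /fb'; apply: fb_mono; first exact: svec_le_upd.
    by rewrite upd_eq.
  by rewrite !upd_eq.
- by move=> u v h; have -> : u = v by apply/ffunP => k; apply: h; rewrite inE.
- by move=> u v h; have -> : u = v by apply/ffunP => k; apply: h; rewrite inE.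
Qed.

Lemma push_supp (Phi : {set 'I_n} -> R) :
  \sum_(v : V) mu Wj v * Phi (supp v) =
  p i j * \sum_(Q : {set 'I_n}) prob_set z Q * (i \in Q)%:R * Phi Q.
Proof.
transitivity (\sum_(Q : {set 'I_n}) Phi Q * \sum_(v : V)
     \prod_k (Wj k (v k) * (((v k : nat) != 0%N) == (k \in Q))%:R)).
  transitivity (\sum_(v : V) \sum_(Q : {set 'I_n}) mu Wj v * ((supp v == Q)%:R * Phi Q)).
    apply: eq_bigr => v _; rewrite -mulr_sumr; congr (_ * _).
    by rewrite (eq_bigr (fun Q => (Q == supp v)%:R * Phi Q)) ?sum_ind // => Q _; rewrite eq_sym.
  rewrite exchange_big; apply: eq_bigr => Q _; rewrite mulr_sumr; apply: eq_bigr => v _.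
  rewrite eq_set_prod big_split /=.
  have -> : \prod_k ((k \in supp v) == (k \in Q))%:R = \prod_k (((v k : nat) != 0%N) == (k \in Q))%:R :> R.
    by apply: eq_bigr => k _; rewrite inE.
  rewrite /mu; ring.
rewrite mulr_sumr; apply: eq_bigr => Q _.
rewrite -(bigA_distr_bigA (fun k a => Wj k a * (((a : nat) != 0%N) == (k \in Q))%:R)) /=.
rewrite /prob_set (bigD1 i) //= [in RHS](bigD1 i) //=.
have hk : forall k, k != i -> \sum_a Wj k a * (((a : nat) != 0%N) == (k \in Q))%:R =
                            (if k \in Q then z k else 1 - z k).
  move=> k hk; rewrite /Wj (negbTE hk) sum_nz /hw /=.
  rewrite (eq_bigr (fun a => p k a * z k * (true == (k \in Q))%:R)); last first.
    by move=> a ha; rewrite (negbTE ha).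
  rewrite -!mulr_suml hp1 mul1r; case: (k \in Q) => /=; ring.
rewrite (eq_bigr _ hk).
have -> : \sum_a Wj i a * (((a : nat) != 0%N) == (i \in Q))%:R = p i j * z i * (i \in Q)%:R.
  rewrite /Wj eqxx (eq_bigr (fun a => (a == j)%:R * (hw i a * (((a : nat) != 0%N) == (i \in Q))%:R))).
    by rewrite sum_ind hw_j hj.
  by move=> a _; ring.
case: (i \in Q) => /=; ring.
Qed.

Lemma step4 : gamma * (p i j * z i) <= \sum_(v : V) mu Wj v * fa' v.
Proof.
pose Fq Q := \sum_(S : {set 'I_n}) chi z Q S * (i \in S)%:R.
have e1 : \sum_(v : V) mu Wj v * fa' v = \sum_(v : V) mu Wj v * Fq (supp v).
  apply: eq_bigr => v _; case: (eqVneq (v i) j) => h; first by rewrite /fa' upd_j.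
  by rewrite mu_Wj0 // !mul0r.
have e0 : p i j * z i = p i j * \sum_(Q : {set 'I_n}) prob_set z Q * (i \in Q)%:R.
  have h1 := push_supp (fun _ => 1).
  rewrite -S0_eq; transitivity (\sum_(v : V) mu Wj v * 1); first by apply: eq_bigr => v _; rewrite mulr1.
  by rewrite h1; congr (_ * _); apply: eq_bigr => Q _; rewrite mulr1.
rewrite e1 push_supp e0 mulrCA; apply: ler_wpM2l; first by apply: hp0.
case: chiP => _ _ _ hg _; apply: le_trans (hg i) _; rewrite le_eqVlt; apply/orP; left; apply/eqP.
apply: eq_bigr => Q _; rewrite -mulrA; congr (_ * _); rewrite /Fq mulr_sumr; apply: eq_bigr => S _.
by case: (i \in S); case: (i \in Q) => /=; ring.
Qed.

Definition Xp (v : V) (t : {ffun 'I_n -> 'I_C.+1}) : nat :=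
  \sum_(k | (k != i) && ((v k : nat) != 0%N) && (t k <= t i)%N) minn (c k (v k)) (t i).

Lemma cond_bound (v : V) (t : {ffun 'I_n -> 'I_C.+1}) : (0 < t i)%N ->
  (1 : R) - (cond i v t)%:R <= (Xp v t)%:R / (t i : nat)%:R.
Proof.
move=> ht; case: (boolP (cond i v t)) => hc'.
  by rewrite subrr divr_ge0 ?ler0n.
rewrite subr0 ler_pdivlMr ?ltr0n // mul1r ler_nat.
move: hc'; rewrite /cond -ltnNge => hc'.
have := minn_sum (fun k => (k != i) && ((v k : nat) != 0%N) && (t k <= t i)%N)
                 (fun k => c k (v k)) (t i).
by rewrite (minn_idPr (ltnW hc')).
Qed.

Lemma tweight_ti0 (v : V) (t : {ffun 'I_n -> 'I_C.+1}) : v i = j -> z i != 0 -> (t i : nat) = 0%N ->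
  tweight y z v t = 0.
Proof.
move=> hv hz ht; rewrite tweight_prod (bigD1 i) //= /twa hv hj hz /=.
have -> : t i = ord0 by apply: val_inj.
by rewrite y_t0 !mul0r.
Qed.

Lemma one_minus_fb (v : V) : v i = j -> z i != 0 ->
  1 - fb' v <= \sum_t tweight y z v t * ((Xp v t)%:R / (t i : nat)%:R).
Proof.
move=> hv hz; rewrite /fb' upd_j //.
have -> : 1 - fb i v = \sum_t tweight y z v t * (1 - (cond i v t)%:R).
  rewrite (eq_bigr (fun t => tweight y z v t - tweight y z v t * (cond i v t)%:R)).
    by rewrite sumrB tweight_sum.
  by move=> t _; rewrite mulrBr mulr1.
apply: ler_sum => t _.
case: (posnP (t i)) => ht.
  by rewrite tweight_ti0 // !mul0r.
apply: ler_wpM2l; [exact: tweight_ge0 | exact: cond_bound].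
Qed.

Definition psi_k (k : 'I_n) (a : 'I_B.+1) (tau tau' : 'I_C.+1) : R :=
  ((a : nat) != 0%N)%:R * ((tau' <= tau)%N)%:R * (minn (c k a) tau)%:R / (tau : nat)%:R.

Lemma Xp_split (v : V) (t : {ffun 'I_n -> 'I_C.+1}) :
  (Xp v t)%:R / (t i : nat)%:R = \sum_(k | k != i) psi_k k (v k) (t i) (t k).
Proof.
rewrite /Xp natr_sum mulr_suml.
rewrite (eq_bigl (fun k => (k != i) && (((v k:nat) != 0%N) && (t k <= t i)%N))); last by move=> k; rewrite andbA.
rewrite big_mkcondr /=; apply: eq_bigr => k _.
by rewrite /psi_k; case: ((v k : nat) != 0%N); case: (t k <= t i)%N => /=; ring.
Qed.

Lemma inner_t (v : V) k : k != i ->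
  \sum_(t : {ffun 'I_n -> 'I_C.+1}) tweight y z v t * psi_k k (v k) (t i) (t k) =
  \sum_tau \sum_tau' twa (v i) i tau * twa (v k) k tau' * psi_k k (v k) tau tau'.
Proof.
move=> hk.
rewrite (eq_bigr (fun t : {ffun 'I_n -> 'I_C.+1} =>
   (\prod_m twa (v m) m (t m)) * psi_k k (v k) (t i) (t k))) //.
have hik : i != k by rewrite eq_sym.
by rewrite (marg2 (W := fun m tau => twa (v m) m tau) (psi_k k (v k)) hik
           (fun m _ _ => twa_sum (v m) m)).
Qed.

Definition Psi k (a b : 'I_B.+1) : R :=
  \sum_tau \sum_tau' twa a i tau * twa b k tau' * psi_k k b tau tau'.

Lemma Tk_eq k : k != i ->
  \sum_(v : V) mu Wj v * \sum_(t : {ffun 'I_n -> 'I_C.+1}) tweight y z v t * psi_k k (v k) (t i) (t k)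
  = hw i j * \sum_b hw k b * Psi k j b.
Proof.
move=> hk.
transitivity (\sum_(v : V) mu Wj v * Psi k (v i) (v k)).
  by apply: eq_bigr => v _; rewrite inner_t.
have hik : i != k by rewrite eq_sym.
have hm := marg2 (W := Wj) (Psi k) hik (fun m hm _ => Wj_sum hm).
rewrite /mu hm.
rewrite (eq_bigr (fun a => (a == j)%:R * (hw i a * \sum_b hw k b * Psi k a b))) ?sum_ind //.
move=> a _; rewrite !mulr_sumr; apply: eq_bigr => b _; rewrite /Wj eqxx (negbTE hk); ring.
Qed.

Definition Kt k (tau : 'I_C.+1) : R :=
  y i tau / (tau : nat)%:R * (expected_min p c k tau * \sum_(tau' : 'I_C.+1 | (tau' <= tau)%N) y k tau').

Lemma Psi_val k : k != i -> z i != 0 ->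
  z i * \sum_b hw k b * Psi k j b = \sum_tau Kt k tau.
Proof.
move=> hk hz.
pose G (b : 'I_B.+1) (tau tau' : 'I_C.+1) : R := ((b : nat) != 0%N)%:R * p k b * y i tau * y k tau' *
   ((tau' <= tau)%N)%:R * (minn (c k b) tau)%:R / (tau : nat)%:R.
transitivity (\sum_b \sum_tau \sum_tau' G b tau tau').
  rewrite mulr_sumr; apply: eq_bigr => b _.
  case: (eqVneq (b : nat) 0%N) => hb.
    have e : ((b : nat) != 0%N) = false by rewrite hb.
    rewrite /Psi /G /psi_k e /=.
    rewrite [in LHS]big1 ?mulr0 //; last by move=> tau _; apply: big1 => tau' _; ring.
    by symmetry; apply: big1 => tau _; apply: big1 => tau' _; ring.
  rewrite /Psi !mulr_sumr; apply: eq_bigr => tau _; rewrite !mulr_sumr; apply: eq_bigr => tau' _.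
  have -> : z i * (hw k b * (twa j i tau * twa b k tau' * psi_k k b tau tau')) =
            hw k b * (z i * twa j i tau) * twa b k tau' * psi_k k b tau tau' by ring.
  rewrite /G /psi_k (twa_z i tau hj) /hw (negbTE hb) -(twa_z k tau' hb) /=; ring.
rewrite exchange_big; apply: eq_bigr => tau _.
rewrite /Kt /expected_min [X in _ * (X * _)]big_mkcond [X in _ * (_ * X)]big_mkcond /= -sum2_mul mulr_sumr.
apply: eq_bigr => b _; rewrite mulr_sumr; apply: eq_bigr => tau' _; rewrite /G.
by case: (boolP ((b : nat) != 0%N)) => _; case: (boolP (tau' <= tau)%N) => _ /=; ring.
Qed.

Lemma Kt_ge0 k tau : 0 <= Kt k tau.
Proof.
rewrite /Kt; apply: mulr_ge0; first by rewrite divr_ge0 ?y_ge0 ?ler0n.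
apply: mulr_ge0; last by apply: sumr_ge0 => t _; exact: y_ge0.
by apply: sumr_ge0 => s hs; rewrite mulr_ge0 ?ler0n ?hp0.
Qed.

Lemma Ysum k (tau : 'I_C.+1) :
  \sum_(tau' : 'I_C.+1 | (tau' <= tau)%N) y k tau' =
  l * \sum_(tau' : 'I_C.+1 | (0 < tau' <= tau)%N) x k tau'.
Proof.
rewrite big_mkcond [X in _ * X]big_mkcond mulr_sumr; apply: eq_bigr => t _ /=.
case: (posnP t) => ht.
  have ht0 : t = ord0 by apply: val_inj.
  by rewrite ht0 y_t0 /= mulr0.
by rewrite /=; case: (t <= tau)%N; rewrite ?mulr0 ?hy.
Qed.

Lemma Kt_sum_bound (tau : 'I_C.+1) :
  \sum_k Kt k tau <= 2 * l * y i tau.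
Proof.
case: (posnP tau) => ht.
  have ht0 : tau = ord0 by apply: val_inj.
  rewrite ht0 y_t0 mulr0 big1 // => k _; by rewrite /Kt y_t0 !mul0r.
have -> : \sum_k Kt k tau = y i tau / (tau : nat)%:R *
    (l * \sum_k expected_min p c k tau * \sum_(t' : 'I_C.+1 | (0 < t' <= tau)%N) x k t').
  rewrite /Kt -mulr_sumr; congr (_ * _); rewrite mulr_sumr; apply: eq_bigr => k _; rewrite Ysum; ring.
case: hx => _ _ _ _ hcon.
have hc' := hcon tau ht.
apply: le_trans (_ : _ <= y i tau / (tau : nat)%:R * (l * (2 * (tau : nat)%:R))) _.
  apply: ler_wpM2l; first by rewrite divr_ge0 ?y_ge0 ?ler0n.
  by apply: ler_wpM2l; [exact: l_ge0 | exact: hc'].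
rewrite le_eqVlt; apply/orP; left; apply/eqP; field.
by rewrite pnatr_eq0 -lt0n.
Qed.

Lemma claimB : z i != 0 ->
  \sum_(v : V) mu Wj v * \sum_(t : {ffun 'I_n -> 'I_C.+1}) tweight y z v t * ((Xp v t)%:R / (t i : nat)%:R)
  <= 2 * l * (p i j * z i).
Proof.
move=> hz.
have e : \sum_(v : V) mu Wj v * \sum_(t : {ffun 'I_n -> 'I_C.+1}) tweight y z v t * ((Xp v t)%:R / (t i : nat)%:R)
  = \sum_(k | k != i) \sum_(v : V) mu Wj v *
      \sum_(t : {ffun 'I_n -> 'I_C.+1}) tweight y z v t * psi_k k (v k) (t i) (t k).
  transitivity (\sum_(v : V) \sum_(k | k != i) mu Wj v *
      \sum_(t : {ffun 'I_n -> 'I_C.+1}) tweight y z v t * psi_k k (v k) (t i) (t k)).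
    apply: eq_bigr => v _; rewrite -mulr_sumr; congr (_ * _).
    transitivity (\sum_(t : {ffun 'I_n -> 'I_C.+1}) \sum_(k | k != i) tweight y z v t * psi_k k (v k) (t i) (t k)).
      by apply: eq_bigr => t _; rewrite Xp_split mulr_sumr.
    by rewrite exchange_big.
  by rewrite exchange_big.
rewrite e.
have e2 : forall k, k != i -> \sum_(v : V) mu Wj v *
      \sum_(t : {ffun 'I_n -> 'I_C.+1}) tweight y z v t * psi_k k (v k) (t i) (t k)
    = p i j * \sum_tau Kt k tau.
  by move=> k hk; rewrite Tk_eq // hw_j -mulrA Psi_val.
rewrite (eq_bigr _ e2).
apply: le_trans (_ : _ <= \sum_k p i j * \sum_tau Kt k tau) _.
  rewrite [X in _ <= X](bigID (fun k => k != i)) /= lerDl; apply: sumr_ge0 => k _.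
  by apply: mulr_ge0; [apply: hp0 | apply: sumr_ge0 => tau _; exact: Kt_ge0].
rewrite -mulr_sumr exchange_big /=.
have h : \sum_tau \sum_k Kt k tau <= \sum_tau 2 * l * y i tau.
  by apply: ler_sum => tau _; exact: Kt_sum_bound.
rewrite -mulr_sumr in h.
have -> : 2 * l * (p i j * z i) = p i j * (2 * l * z i) by ring.
by apply: ler_wpM2l; [exact: hp0 | exact: h].
Qed.

Lemma step5 : z i != 0 -> (1 - 2 * l) * (p i j * z i) <= \sum_(v : V) mu Wj v * fb' v.
Proof.
move=> hz.
have hA : \sum_(v : V) mu Wj v * (1 - fb' v) <= 2 * l * (p i j * z i).
  apply: le_trans (claimB hz); apply: ler_sum => v _.
  case: (eqVneq (v i) j) => h.
    by apply: ler_wpM2l; [exact: mu_ge0 | exact: one_minus_fb].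
  by rewrite mu_Wj0 // !mul0r.
have e : \sum_(v : V) mu Wj v * (1 - fb' v) = p i j * z i - \sum_(v : V) mu Wj v * fb' v.
  by rewrite -S0_eq -sumrB; apply: eq_bigr => v _; rewrite mulrBr mulr1.
rewrite e in hA; lra.
Qed.

Lemma main_ineq : (1 - Num.min (2 * beta) (1 / 2)) * gamma * \sum_(v : V) hprob p z v * (v i == j)%:R <=
  \sum_(v : V) hprob p z v * \sum_o psi_c chi c y z v o * ((o i == j) && (v i == j))%:R.
Proof.
rewrite min2l rhs_eq.
have -> : \sum_(v : V) hprob p z v * (v i == j)%:R = p i j * z i.
  by rewrite -S0_eq; apply: eq_bigr => v _; rewrite mu_Wj.
have hR : 0 <= \sum_(v : V) mu Wj v * (fa' v * fb' v).
  by apply: sumr_ge0 => v _; rewrite !mulr_ge0 ?mu_ge0 ?fa_ge0 ?fb_ge0.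
have S0ge : 0 <= p i j * z i by rewrite mulr_ge0 ?hp0 ?z_ge0.
case: (eqVneq (z i) 0) => hz; first by rewrite hz !mulr0.
case: (eqVneq (p i j * z i) 0) => hS; first by rewrite hS mulr0.
have S0pos : 0 < p i j * z i by rewrite lt_neqAle eq_sym hS S0ge.
have h4 := step4; have h5 := step5 hz; have hH := harris_app.
set S0 := p i j * z i in h4 h5 hH S0pos S0ge *.
set A := \sum_(v : V) mu Wj v * fa' v in h4 hH.
set Bb := \sum_(v : V) mu Wj v * fb' v in h5 hH.
set Rr := \sum_(v : V) mu Wj v * (fa' v * fb' v) in hH hR *.
have g0 : 0 <= gamma by case/andP: hgamma.
have l0 : 0 <= 1 - 2 * l by have := l_le4; lra.
have hAB : gamma * S0 * ((1 - 2 * l) * S0) <= A * Bb.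
  by apply: ler_pM => //; rewrite mulr_ge0.
have : S0 * ((1 - 2 * l) * gamma * S0) <= S0 * Rr.
  have -> : S0 * ((1 - 2 * l) * gamma * S0) = gamma * S0 * ((1 - 2 * l) * S0) by ring.
  exact: le_trans hAB hH.
by rewrite ler_pM2l.
Qed.

End Fixed.

Lemma final : is_CRS (hprob p z) (psi_c chi c y z) ((1 - Num.min (2 * beta) (1 / 2)) * gamma)
  /\ is_monotone (psi_c chi c y z).
Proof.
split; last exact: psc_mono.
split.
- exact: psc_ge0.
- exact: psc_sum.
- exact: psc_supp.
- move=> i j hj; exact: main_ineq.
Qed.

End Setting.

Theorem lemma5 (R : realFieldType) (n B C : nat)
  (p : 'I_n -> 'I_B.+1 -> R) (c : 'I_n -> 'I_B.+1 -> nat)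
  (Fam : {set {set 'I_n}}) (beta gamma : R)
  (chi : ('I_n -> R) -> {set 'I_n} -> {set 'I_n} -> R)
  (y : 'I_n -> 'I_C.+1 -> R) :
  (0 < B)%N -> (0 < C)%N ->
  (forall i (s : 'I_B.+1), (s : nat) != 0%N -> 0 <= p i s) ->
  (forall i, \sum_(s : 'I_B.+1 | (s : nat) != 0%N) p i s = 1) ->
  (forall i (s s' : 'I_B.+1), (0 < s')%N -> (s' <= s)%N -> (c i s' <= c i s)%N) ->
  down_closed Fam ->
  0 <= beta <= 1 -> 0 <= gamma <= 1 ->
  monotone_balanced_CRS Fam beta gamma chi ->
  (exists x, P1_feasible p c Fam x /\
             forall i t, y i t = Num.min beta (1 / 4) * x i t) ->
  is_CRS (hprob p (xbar y)) (psi_c chi c y (xbar y))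
         ((1 - Num.min (2 * beta) (1 / 2)) * gamma)
  /\ is_monotone (psi_c chi c y (xbar y)).
Proof.
move=> _ _ hp0 hp1 hc hdown hbeta hgamma hchi [x [hx hy]].
by apply: (final hp0 hp1 hc hdown hbeta hgamma hchi hx hy).
Qed.
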